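(* Let $(H,\partial)$ be a right Cartan–Eilenberg system, with right couple $(A'',E^1,\alpha,\beta,\gamma)$. Then there is a natural isomorphism $$W''\xrightarrow{\ \cong\ }\ker(\kappa)$$ of internal degree $-1$, where $W''=\operatorname{colim}_s\operatorname{Rlim}_r K_\infty\operatorname{im}^rA''_s$ is Boardman's whole-plane obstruction group of the right couple and $\kappa\colon \operatorname{colim}_j\lim_iH(i,j)\to\lim_i\operatorname{colim}_jH(i,j)$ is the interchange morphism of the underlying Cartan–Eilenberg system. (No convergence hypothesis is assumed.)
   Context: Let $R$ be a ring and $\mathcal{A}$ the abelian category of $\mathbb{Z}$-graded $R$-modules (grading = internal degree). For a linearly ordered set $\mathcal{I}$, an $\mathcal{I}$-system $(H,\partial)$ consists of objects $H(i,j)\in\mathcal{A}$ for $i\le j$ in $\mathcal{I}$, functorial morphisms $\eta\colon H(i,j)\to H(i',j')$ of internal degree $0$ for $i\le i'$, $j\le j'$, and natural morphisms $\partial\colon H(j,k)\to H(i,j)$ of internal degree $-1$ for $i\le j\le k$ (commuting with the $\eta$'s), such that $H(i,j)\xrightarrow{\eta}H(i,k)\xrightarrow{\eta}H(j,k)\xrightarrow{\partial}H(i,j)$ is exact at each vertex for all $i\le j\le k$. A Cartan–Eilenberg system is a $\mathbb{Z}$-system; a right Cartan–Eilenberg system is a $(\mathbb{Z}\cup\{+\infty\})$-system, $+\infty$ being the greatest element; its underlying Cartan–Eilenberg system is its restriction to $\mathbb{Z}$. The right couple of a right Cartan–Eilenberg system: $A''_s=H(s,\infty)$, $E^1_s=H(s-1,s)$,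 $\alpha_s=\eta\colon A''_{s-1}\to A''_s$, $\beta_s=\partial\colon H(s,\infty)\to H(s-1,s)$, $\gamma_s=\eta\colon H(s-1,s)\to H(s-1,\infty)$. For an exact couple (or any sequence) $\cdots\to A_{s-1}\xrightarrow{\alpha}A_s\to\cdots$: $A_\infty=\operatorname{colim}_sA_s$ with structure maps $\iota_s\colon A_s\to A_\infty$; $\operatorname{im}^rA_s=\operatorname{im}(\alpha^r\colon A_{s-r}\to A_s)$; $K_\infty\operatorname{im}^rA_s=\ker(\iota_s)\cap\operatorname{im}^rA_s$, a decreasing sequence in $r$; $W=\operatorname{colim}_s\operatorname{Rlim}_rK_\infty\operatorname{im}^rA_s$ (colimit along maps induced by $\alpha$), where $\operatorname{Rlim}=\lim^1$. Limits/derived limits over $i$ are along $\eta\colon H(i-1,j)\to H(i,j)$ as $i\to-\infty$, colimits over $j$ along $\eta\colon H(i,j)\to H(i,j+1)$. The interchange morphism $\kappa\colon\operatorname{colim}_j\lim_iH(i,j)\to\lim_i\operatorname{colim}_jH(i,j)$ is the canonical morphism whose restriction to $\lim_iH(i,j)$ followed by projection to $\operatorname{colim}_jH(i,j)$ is $\lim_iH(i,j)\to H(i,j)\to\operatorname{colim}_jH(i,j)$. *)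

(* Defs.v *)
From HB Require Import structures.
From mathcomp Require Import all_boot all_order all_algebra.
Set Implicit Arguments. Unset Strict Implicit. Unset Printing Implicit Defensive.
Import Order.TTheory GRing.Theory Num.Theory.
Local Open Scope ring_scope.

Inductive ext := Fin of int | Inf.

Definition ext_le (a b : ext) : Prop :=
  match a, b with
  | Fin x, Fin y => (x <= y)%R
  | _, Inf => True
  | Inf, Fin _ => False
  end.

Section RightCE.
Variable R : pzRingType.

(** A right Cartan–Eilenberg system in graded left R-modules.
    [obj i j n] is the degree-n part of H(i,j) (only meaningful for i <= j);
    [eta i j i' j' n] is the degree-0 map H(i,j) -> H(i',j') in degree n
    (meaningful for i <= i', j <= j'); [del i j k n] is the degree -1 map
    H(j,k)_n -> H(i,j)_{n-1}. Values at invalid indices are irrelevant. *)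
Record RCE := {
  obj : ext -> ext -> int -> lmodType R;
  eta : forall i j i' j' n, {linear obj i j n -> obj i' j' n};
  del : forall i j k n, {linear obj j k n -> obj i j (n - 1)};
  eta_id : forall i j n (x : obj i j n), ext_le i j -> eta i j i j n x = x;
  eta_comp : forall i j i' j' i'' j'' n (x : obj i j n),
      ext_le i j -> ext_le i' j' -> ext_le i'' j'' ->
      ext_le i i' -> ext_le j j' -> ext_le i' i'' -> ext_le j' j'' ->
      eta i' j' i'' j'' n (eta i j i' j' n x) = eta i j i'' j'' n x;
  del_nat : forall i j k i' j' k' n (x : obj j k n),
      ext_le i j -> ext_le j k -> ext_le i' j' -> ext_le j' k' ->
      ext_le i i' -> ext_le j j' -> ext_le k k' ->
      eta i j i' j' (n - 1) (del i j k n x) = del i' j' k' n (eta j k j' k' n x);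
  exact_ik : forall i j k n (y : obj i k n), ext_le i j -> ext_le j k ->
      (eta i k j k n y = 0 <-> exists x : obj i j n, eta i j i k n x = y);
  exact_jk : forall i j k n (y : obj j k n), ext_le i j -> ext_le j k ->
      (del i j k n y = 0 <-> exists x : obj i k n, eta i k j k n x = y);
  exact_ij : forall i j k n (y : obj i j (n - 1)), ext_le i j -> ext_le j k ->
      (eta i j i k (n - 1) y = 0 <-> exists x : obj j k n, del i j k n x = y)
}.

Record RCEMor (X Y : RCE) := {
  mor : forall i j n, {linear obj X i j n -> obj Y i j n};
  mor_eta : forall i j i' j' n (x : obj X i j n),
      ext_le i j -> ext_le i' j' -> ext_le i i' -> ext_le j j' ->
      mor i' j' n (eta X i j i' j' n x) = eta Y i j i' j' n (mor i j n x);
  mor_del : forall i j k n (x : obj X j k n), ext_le i j -> ext_le j k ->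
      mor i j (n - 1) (del X i j k n x) = del Y i j k n (mor j k n x)
}.

Variable X : RCE.

(** Right couple: A''_s = H(s, oo); the composite alpha^(t-s) : A''_s -> A''_t
    equals eta by functoriality. *)
Definition Acp (s n : int) := obj X (Fin s) Inf n.
Definition alpha (s t n : int) : Acp s n -> Acp t n := eta X (Fin s) Inf (Fin t) Inf n.
Arguments alpha s t n _ : clear implicits.

(** K_oo im^r A''_s = ker(iota_s) ∩ im(alpha^r : A''_{s-r} -> A''_s), where
    ker(iota_s : A''_s -> colim A'') = {a | alpha^(t-s) a = 0 for some t >= s}. *)
Definition Kinf (n : int) (r : nat) (s : int) (a : Acp s n) : Prop :=
  (exists b : Acp (s - r%:Z) n, alpha (s - r%:Z) s n b = a) /\
  (exists t, s <= t /\ alpha s t n a = 0).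
Arguments Kinf n r s a : clear implicits.

(** W''_n = colim_s Rlim_r K_oo im^r A''_s  (degree n), presented by
    representatives (s, x) with x in prod_r K_oo im^r A''_s;
    Rlim_r = coker (prod_r K^r -> prod_r K^r, (w_r) |-> (w_r - w_{r+1})). *)
Definition Wrep (n : int) := {s : int & nat -> Acp s n}.

Definition Wmem n (a : Wrep n) : Prop :=
  forall r, Kinf n r (projT1 a) (projT2 a r).

Definition Weqv n (a b : Wrep n) : Prop :=
  exists u, projT1 a <= u /\ projT1 b <= u /\
  exists w : nat -> Acp u n, (forall r, Kinf n r u (w r)) /\
  forall r, alpha (projT1 a) u n (projT2 a r) - alpha (projT1 b) u n (projT2 b r)
            = w r - w r.+1.

Definition WLin n (a b : Wrep n) (c : R) (z : Wrep n) : Prop :=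
  exists u, projT1 a <= u /\ projT1 b <= u /\ projT1 z <= u /\
  exists w : nat -> Acp u n, (forall r, Kinf n r u (w r)) /\
  forall r, alpha (projT1 z) u n (projT2 z r)
            - (alpha (projT1 a) u n (projT2 a r) + c *: alpha (projT1 b) u n (projT2 b r))
            = w r - w r.+1.

(** ker(kappa) in degree m, kappa : colim_j lim_i H(i,j) -> lim_i colim_j H(i,j),
    presented by representatives (j, x) with x = (x_i)_{i <= j} a compatible family
    (an element of lim_i H(i,j)) all of whose components vanish in colim_j H(i,j). *)
Definition Krep (m : int) := {j : int & forall i : int, obj X (Fin i) (Fin j) m}.

Definition push (m i j k : int) : obj X (Fin i) (Fin j) m -> obj X (Fin i) (Fin k) m :=
  eta X (Fin i) (Fin j) (Fin i) (Fin k) m.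

Definition Kmem m (a : Krep m) : Prop :=
  (forall i, i <= projT1 a ->
     eta X (Fin (i - 1)) (Fin (projT1 a)) (Fin i) (Fin (projT1 a)) m (projT2 a (i - 1))
     = projT2 a i) /\
  (forall i, i <= projT1 a ->
     exists k, projT1 a <= k /\ push k (projT2 a i) = 0).

Definition Keqv m (a b : Krep m) : Prop :=
  exists k, projT1 a <= k /\ projT1 b <= k /\
  forall i, i <= projT1 a -> i <= projT1 b ->
    push k (projT2 a i) = push k (projT2 b i).

Definition KLin m (a b : Krep m) (c : R) (z : Krep m) : Prop :=
  exists k, projT1 a <= k /\ projT1 b <= k /\ projT1 z <= k /\
  forall i, i <= projT1 a -> i <= projT1 b -> i <= projT1 z ->
    push k (projT2 z i) = push k (projT2 a i) + c *: push k (projT2 b i).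

Definition is_iso_deg_m1 n (f : Wrep n -> Krep (n - 1)) : Prop :=
  (forall a, Wmem a -> Kmem (f a)) /\
  (forall a b, Wmem a -> Wmem b -> Weqv a b -> Keqv (f a) (f b)) /\
  (forall a b c z, Wmem a -> Wmem b -> Wmem z -> WLin a b c z ->
     KLin (f a) (f b) c (f z)) /\
  (forall a b, Wmem a -> Wmem b -> Keqv (f a) (f b) -> Weqv a b) /\
  (forall k, Kmem k -> exists a, Wmem a /\ Keqv (f a) k).

End RightCE.

Definition Wmap (R : pzRingType) (X Y : RCE R) (phi : RCEMor X Y) n
  (a : Wrep X n) : Wrep Y n :=
  existT _ (projT1 a) (fun r => mor phi (Fin (projT1 a)) Inf n (projT2 a r)).

Definition Kmap (R : pzRingType) (X Y : RCE R) (phi : RCEMor X Y) m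
  (a : Krep X m) : Krep Y m :=
  existT _ (projT1 a) (fun i => mor phi (Fin i) (Fin (projT1 a)) m (projT2 a i)).

(* Main.v *)
Require Import Defs.
From HB Require Import structures.
From mathcomp Require Import all_boot all_order all_algebra zify.
From Stdlib Require Import IndefiniteDescription.
Import Order.TTheory GRing.Theory Num.Theory.
Local Open Scope ring_scope.
Set Implicit Arguments. Unset Strict Implicit.

Section Help.
Variable R : pzRingType.
Variable X : RCE R.
Variable n : int.

Local Notation A s := (Acp X s n).
Local Notation al s t := (@alpha R X s t n).
Local Notation dl i s := (del X (Fin i) (Fin s) Inf n).

Lemma al_comp s t u (x : A s) : s <= t -> t <= u -> al t u (al s t x) = al s u x.
Proof. move=> h1 h2; rewrite /alpha eta_comp //. Qed.

Lemma al_id s (x : A s) : al s s x = x.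
Proof. by rewrite /alpha eta_id. Qed.

Lemma al0 s t : al s t 0 = 0.
Proof. by rewrite /alpha linear0. Qed.
Lemma alD s t x y : al s t (x + y) = al s t x + al s t y.
Proof. by rewrite /alpha linearD. Qed.
Lemma alN s t x : al s t (- x) = - al s t x.
Proof. by rewrite /alpha linearN. Qed.
Lemma alB s t x y : al s t (x - y) = al s t x - al s t y.
Proof. by rewrite /alpha linearB. Qed.
Lemma alZ s t c x : al s t (c *: x) = c *: al s t x.
Proof. by rewrite /alpha linearZ. Qed.

Definition Im m u (v : A u) := exists b : A m, al m u b = v.
Definition Dy u (v : A u) := exists t, u <= t /\ al u t v = 0.
Arguments Im m u v : clear implicits.
Arguments Dy u v : clear implicits.

Lemma Dy0 u : Dy u 0.
Proof. by exists u; rewrite al0. Qed.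

Lemma Dy_mono u t t' (v : A u) : u <= t -> t <= t' -> al u t v = 0 -> al u t' v = 0.
Proof. by move=> h1 h2 h; rewrite -(al_comp v h1 h2) h al0. Qed.

Lemma DyD u (v w : A u) : Dy u v -> Dy u w -> Dy u (v + w).
Proof.
move=> [t1 [h1 e1]] [t2 [h2 e2]].
have [h|h] : t1 <= t2 \/ t2 <= t1 by lia.
- exists t2; split=> //; rewrite alD e2 (Dy_mono h1 h e1); exact: addr0.
- exists t1; split=> //; rewrite alD e1 (Dy_mono h2 h e2); exact: addr0.
Qed.

Lemma DyN u (v : A u) : Dy u v -> Dy u (- v).
Proof. by move=> [t [h e]]; exists t; rewrite alN e oppr0. Qed.

Lemma DyZ u c (v : A u) : Dy u v -> Dy u (c *: v).
Proof. by move=> [t [h e]]; exists t; rewrite alZ e scaler0. Qed.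

Lemma DyB u (v w : A u) : Dy u v -> Dy u w -> Dy u (v - w).
Proof. by move=> ??; apply: DyD => //; apply: DyN. Qed.

Lemma Dysum u N (f : nat -> A u) : (forall r, Dy u (f r)) -> Dy u (\sum_(r < N) f r).
Proof.
move=> h; elim/big_ind: _ => //; [exact: Dy0 | move=> ??; exact: DyD].
Qed.

Lemma Dypush s k (v : A s) : s <= k -> Dy s v -> Dy k (al s k v).
Proof.
move=> hk [t [h e]].
have [h'|h'] : t <= k \/ k <= t by lia.
- exists k; split=> //; rewrite (Dy_mono h h' e) al0; exact: erefl.
- exists t; split=> //; rewrite al_comp //.
Qed.

Lemma Im0 m u : Im m u 0.
Proof. by exists 0; rewrite al0. Qed.
Lemma ImD m u (v w : A u) : Im m u v -> Im m u w -> Im m u (v + w).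
Proof. by move=> [b <-] [c <-]; exists (b + c); rewrite alD. Qed.
Lemma ImZ m u c (v : A u) : Im m u v -> Im m u (c *: v).
Proof. by move=> [b <-]; exists (c *: b); rewrite alZ. Qed.
Lemma ImN m u (v : A u) : Im m u v -> Im m u (- v).
Proof. by move=> [b <-]; exists (- b); rewrite alN. Qed.
Lemma ImB m u (v w : A u) : Im m u v -> Im m u w -> Im m u (v - w).
Proof. by move=> ??; apply: ImD => //; apply: ImN. Qed.
Lemma Impush m s k (v : A s) : m <= s -> s <= k -> Im m s v -> Im m k (al s k v).
Proof. by move=> h1 h2 [b <-]; exists b; rewrite al_comp. Qed.
Lemma Imweak m m' u (v : A u) : m <= m' -> m' <= u -> Im m u v -> Im m' u v.
Proof. by move=> h1 h2 [b <-]; exists (al m m' b); rewrite al_comp. Qed.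

Lemma vanish m i u (v : A u) : m <= i -> i <= u -> Im m u v -> dl i u v = 0.
Proof.
move=> h1 h2 hv; have [b <-] := Imweak h1 h2 hv.
by apply/(exact_jk (i:=Fin i) (j:=Fin u) (k:=Inf)); last exists b.
Qed.

Lemma Im_of_dl i u (v : A u) : i <= u -> dl i u v = 0 -> Im i u v.
Proof.
move=> h e; have [b hb] := (exact_jk (i:=Fin i) (j:=Fin u) (k:=Inf) v h I).1 e.
by exists b.
Qed.

Lemma del_push i s k (v : A s) : i <= s -> s <= k ->
  push k (dl i s v) = dl i k (al s k v).
Proof. move=> h1 h2; rewrite /push (del_nat (k':=Inf)) //=; exact: le_trans h2. Qed.

Lemma del_shift i0 i u (v : A u) : i0 <= i -> i <= u ->
  Defs.eta X (Fin i0) (Fin u) (Fin i) (Fin u) (n - 1) (dl i0 u v) = dl i u v.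
Proof.
move=> h1 h2; rewrite (del_nat (k':=Inf)) //= ?lexx //; last exact: le_trans h2.
by rewrite eta_id.
Qed.


Definition S s i (x : nat -> A s) := \sum_(r < absz (s - i)%R) x r.
Arguments S s i x : clear implicits.
Definition Fs s i (x : nat -> A s) := dl i s (S s i x).
Arguments Fs s i x : clear implicits.

Lemma sum_split (V : zmodType) (f : nat -> V) N M : (N <= M)%N ->
  \sum_(r < M) f r = \sum_(r < N) f r + \sum_(N <= r < M) f r.
Proof. by move=> h; rewrite -!(big_mkord xpredT) (big_cat_nat (leq0n N) h). Qed.

Lemma Imsum_nat m u a b (f : nat -> A u) :
  (forall r, (a <= r < b)%N -> Im m u (f r)) -> Im m u (\sum_(a <= r < b) f r).
Proof.
move=> h; rewrite big_nat_cond; elim/big_ind: _ => //.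
- exact: Im0.
- move=> ??; exact: ImD.
- by move=> r /andP[hr _]; apply: h.
Qed.

Lemma Fs_ext s i (x y : nat -> A s) : (forall r, x r = y r) -> Fs s i x = Fs s i y.
Proof. by move=> h; rewrite /Fs /S; under eq_bigr do rewrite h. Qed.

Lemma Fcompat s i0 i (x : nat -> A s) : (forall r, Im (s - Posz r) s (x r)) ->
  i0 <= i -> i <= s ->
  Defs.eta X (Fin i0) (Fin s) (Fin i) (Fin s) (n - 1) (Fs s i0 x) = Fs s i x.
Proof.
move=> hx h1 h2; rewrite /Fs del_shift // /S.
have hN : (absz (s - i)%R <= absz (s - i0)%R)%N by lia.
rewrite (sum_split x hN) linearD /=.
have := vanish (m := i) (i := i) (u := s) (v := \sum_(absz (s - i)%R <= r < absz (s - i0)%R) x r).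
move=> ->; rewrite ?addr0 //.
apply: Imsum_nat => r /andP[hr1 hr2]; apply: (Imweak (m := s - Posz r)) => //.
lia.
Qed.

Lemma Fpush s i k (x : nat -> A s) : (forall r, Im (s - Posz r) s (x r)) ->
  i <= s -> s <= k ->
  push k (Fs s i x) = Fs k i (fun r => al s k (x r)).
Proof.
move=> hx h1 h2; rewrite /Fs del_push // /S /alpha linear_sum /=.
have hN : (absz (s - i)%R <= absz (k - i)%R)%N by lia.
rewrite [in RHS](sum_split (fun r => Defs.eta X (Fin s) Inf (Fin k) Inf n (x r)) hN) linearD /=.
suff -> : dl i k (\sum_(absz (s - i)%R <= r < absz (k - i)%R) Defs.eta X (Fin s) Inf (Fin k) Inf n (x r)) = 0 by rewrite addr0.
apply: (vanish (m := i)) => //; first exact: le_trans h2.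
apply: Imsum_nat => r /andP[hr1 hr2]; apply: (Imweak (m := s - Posz r)).
- lia.
- exact: le_trans h2.
- apply: Impush; [lia | exact: h2 | exact: hx].
Qed.

Lemma Fsub s i (x y : nat -> A s) : Fs s i (fun r => x r - y r) = Fs s i x - Fs s i y.
Proof. by rewrite /Fs /S sumrB linearB. Qed.

Lemma Flin s i c (x y : nat -> A s) :
  Fs s i (fun r => x r + c *: y r) = Fs s i x + c *: Fs s i y.
Proof. by rewrite /Fs /S big_split /= -scaler_sumr linearD linearZ. Qed.

Lemma Ftel u i (w : nat -> A u) : i <= u -> (forall r, Im (u - Posz r) u (w r)) ->
  Fs u i (fun r => w r - w r.+1) = dl i u (w 0%N).
Proof.
move=> h hw; rewrite /Fs /S.
under eq_bigr do rewrite -opprB.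
rewrite sumrN -(big_mkord xpredT (fun r => w r.+1 - w r)) telescope_sumr //.
rewrite opprB linearB.
have := vanish (m := i) (i := i) (u := u) (v := w (absz (u - i)%R)).
move=> -> //; rewrite ?subr0 //.
have e : u - Posz (absz (u - i)%R) = i by lia.
by move: (hw (absz (u - i)%R)); rewrite e.
Qed.

Lemma core u (p q w : nat -> A u) : (forall r, Im (u - Posz r) u (w r)) ->
  Dy u (w 0%N) -> (forall r, p r - q r = w r - w r.+1) ->
  exists t, u <= t /\ forall i, i <= u -> push t (Fs u i p) = push t (Fs u i q).
Proof.
move=> hw [t [ht e]] hpq; exists t; split=> // i hi.
apply/eqP; rewrite -subr_eq0 /push -linearB /= -Fsub.
rewrite (Fs_ext (x := fun r => p r - q r) (y := fun r => w r - w r.+1) _ hpq) Ftel //.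
by rewrite -/(push t _) del_push // e linear0.
Qed.


Definition Fm (a : Wrep X n) : Krep X (n - 1) :=
  existT _ (projT1 a) (fun i => Fs (projT1 a) i (projT2 a)).

Lemma push_push m i j u t (y : obj X (Fin i) (Fin j) m) :
  i <= j -> j <= u -> u <= t -> push t (push u y) = push t y.
Proof.
move=> h1 h2 h3; rewrite /push eta_comp //=. all: try exact: lexx.
- exact: le_trans h1 h2.
- exact: le_trans (le_trans h1 h2) h3.
Qed.

Lemma pushD m i j k (y z : obj X (Fin i) (Fin j) m) : push k (y + z) = push k y + push k z.
Proof. by rewrite /push linearD. Qed.
Lemma pushZ m i j k c (y : obj X (Fin i) (Fin j) m) : push k (c *: y) = c *: push k y.
Proof. by rewrite /push linearZ. Qed.

Lemma Wmem_Im (a : Wrep X n) : Wmem a -> forall r, Im (projT1 a - Posz r) (projT1 a) (projT2 a r).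
Proof. by move=> h r; case: (h r). Qed.
Lemma Wmem_Dy (a : Wrep X n) : Wmem a -> forall r, Dy (projT1 a) (projT2 a r).
Proof. by move=> h r; case: (h r). Qed.

Lemma P1 (a : Wrep X n) : Wmem a -> Kmem (Fm a).
Proof.
case: a => s x h; have hI := Wmem_Im h; have hD := Wmem_Dy h; simpl in *.
split=> /= i hi.
- apply: Fcompat => //; lia.
- have [t [ht e]] : Dy s (S s i x) by apply: Dysum.
  exists t; split=> //; rewrite /Fs del_push //.
  by rewrite e linear0.
Qed.


Lemma P2 (a b : Wrep X n) : Wmem a -> Wmem b -> Weqv a b -> Keqv (Fm a) (Fm b).
Proof.
case: a => sa xa; case: b => sb xb ha hb.
have hIa := Wmem_Im ha; have hIb := Wmem_Im hb; simpl in *.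
move=> [u [hu1 [hu2 [w [hw he]]]]]; simpl in *.
have hwI : forall r, Im (u - Posz r) u (w r) by move=> r; case: (hw r).
have hw0 : Dy u (w 0%N) by case: (hw 0%N).
have [t [ht E]] := core (p := fun r => al sa u (xa r)) (q := fun r => al sb u (xb r)) hwI hw0 he.
exists t; split; first exact: le_trans hu1 ht.
split; first exact: le_trans hu2 ht.
move=> i /= hia hib.
rewrite -(push_push (u := u) (t := t) (Fs sa i xa) hia hu1 ht).
rewrite -(push_push (u := u) (t := t) (Fs sb i xb) hib hu2 ht).
rewrite (Fpush (k:=u) hIa) // (Fpush (k:=u) hIb) //; exact: E (le_trans hia hu1).
Qed.

Lemma P3 (a b z : Wrep X n) c : Wmem a -> Wmem b -> Wmem z -> WLin a b c z ->
  KLin (Fm a) (Fm b) c (Fm z).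
Proof.
case: a => sa xa; case: b => sb xb; case: z => sz xz ha hb hz.
have hIa := Wmem_Im ha; have hIb := Wmem_Im hb; have hIz := Wmem_Im hz; simpl in *.
move=> [u [hu1 [hu2 [hu3 [w [hw he]]]]]]; simpl in *.
have hwI : forall r, Im (u - Posz r) u (w r) by move=> r; case: (hw r).
have hw0 : Dy u (w 0%N) by case: (hw 0%N).
have [t [ht E]] := core (p := fun r => al sz u (xz r))
   (q := fun r => al sa u (xa r) + c *: al sb u (xb r)) hwI hw0 he.
exists t; split; first exact: le_trans hu1 ht.
split; first exact: le_trans hu2 ht.
split; first exact: le_trans hu3 ht.
move=> i /= hia hib hiz.
rewrite -(push_push (u := u) (t := t) (Fs sa i xa) hia hu1 ht).
rewrite -(push_push (u := u) (t := t) (Fs sb i xb) hib hu2 ht).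
rewrite -(push_push (u := u) (t := t) (Fs sz i xz) hiz hu3 ht).
rewrite (Fpush (k:=u) hIa) // (Fpush (k:=u) hIb) // (Fpush (k:=u) hIz) //.
rewrite E; last exact: le_trans hia hu1.
by rewrite Flin pushD pushZ.
Qed.


Lemma P4 (a b : Wrep X n) : Wmem a -> Wmem b -> Keqv (Fm a) (Fm b) -> Weqv a b.
Proof.
case: a => sa xa; case: b => sb xb ha hb.
have hIa := Wmem_Im ha; have hIb := Wmem_Im hb.
have hDa := Wmem_Dy ha; have hDb := Wmem_Dy hb; simpl in *.
move=> [k [hk1 [hk2 hE]]]; simpl in *.
pose z r := al sa k (xa r) - al sb k (xb r).
have hzI : forall r, Im (k - Posz r) k (z r).
  move=> r; apply: ImB.
  - apply: (Imweak (m := sa - Posz r)); [lia | lia | ].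
    apply: Impush; [lia | exact: hk1 | exact: hIa].
  - apply: (Imweak (m := sb - Posz r)); [lia | lia | ].
    apply: Impush; [lia | exact: hk2 | exact: hIb].
have hzD : forall r, Dy k (z r).
  by move=> r; apply: DyB; apply: Dypush.
have hzF : forall i, i <= k -> Fs k i z = 0.
  move=> i hi.
  have [i1 [h1 [h2 h3]]] : exists i1, i1 <= i /\ i1 <= sa /\ i1 <= sb.
    have : (i <= sa /\ i <= sb) \/ (sa <= i /\ sa <= sb) \/ (sb <= i /\ sb <= sa) by lia.
    case=> [[? ?]|[[? ?]|[? ?]]]; [exists i | exists sa | exists sb]; split=> //; split=> //.
  rewrite -(Fcompat hzI h1 hi).
  suff -> : Fs k i1 z = 0 by rewrite linear0.
  rewrite /z Fsub -(Fpush hIa h2 hk1) -(Fpush hIb h3 hk2) hE //; exact: subrr.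
exists k; split=> //; split=> //.
exists (fun r => - \sum_(r' < r) z r'); split.
- move=> r; split.
  + apply: ImN; apply: Im_of_dl; first lia.
    have e : absz (k - (k - Posz r))%R = r by lia.
    have := hzF (k - Posz r) ltac:(lia); by rewrite /Fs /S e.
  + by apply: DyN; apply: Dysum.
- move=> r /=; rewrite big_ord_recr /= opprK addKr //.
Qed.


Lemma Hjj0 j m (z : obj X (Fin j) (Fin j) m) : z = 0.
Proof.
have h : Defs.eta X (Fin j) (Fin j) (Fin j) (Fin j) m z = 0.
  apply/(exact_ik (i:=Fin j) (j:=Fin j) (k:=Fin j)); rewrite /= ?lexx //.
  by exists z; rewrite eta_id //= lexx.
by move: h; rewrite eta_id //= lexx.
Qed.

Lemma P5 (k : Krep X (n - 1)) : Kmem k -> exists a, Wmem a /\ Keqv (Fm a) k.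
Proof.
case: k => j y [hc hd]; simpl in *.
have ch : forall i, exists a : A j, i <= j -> dl i j a = y i /\ Dy j a.
  move=> i; case: (boolP (i <= j)) => hij; last by exists 0.
  have [k [hk e]] := hd i hij.
  have e' : Defs.eta X (Fin i) (Fin j) (Fin i) Inf (n - 1) (y i) = 0.
    rewrite /push in e.
    rewrite -(eta_comp (i':=Fin i) (j':=Fin k)) /= ?e ?linear0 ?lexx //.
    exact: le_trans hij hk.
  have [a0 ha0] := (exact_ij (i:=Fin i) (j:=Fin j) (k:=Inf) (y i) hij I).1 e'.
  have e2 : dl i k (al j k a0) = 0 by rewrite -del_push // ha0.
  have [c hc'] := (exact_jk (i:=Fin i) (j:=Fin k) (k:=Inf) _ (le_trans hij hk) I).1 e2.
  exists (a0 - al i j c) => _; split.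
  - rewrite linearB ha0 (vanish (m := i)) ?subr0 //; by exists c.
  - exists k; split=> //; rewrite alB al_comp //.
    have -> : al i k c = al j k a0 by [].
    exact: subrr.
pose a i := proj1_sig (constructive_indefinite_description _ (ch i)).
have ha : forall i, i <= j -> dl i j (a i) = y i /\ Dy j (a i).
  by move=> i; exact: (proj2_sig (constructive_indefinite_description _ (ch i))).
pose a' i := if i < j then a i else 0.
have ha'1 : forall i, i <= j -> dl i j (a' i) = y i.
  move=> i hi; rewrite /a'; case: ifP => hij; first by case: (ha i hi).
  have eij : i = j by apply/eqP; rewrite eq_le hi /= leNgt hij.
  move: (y i); rewrite eij => yj; rewrite linear0; exact/esym/Hjj0.
have ha'2 : forall i, Dy j (a' i).
  move=> i; rewrite /a'; case: ifP => hij; last exact: Dy0.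
  by case: (ha i (ltW hij)).
have ha'j : a' j = 0 by rewrite /a' ltxx.
pose x r := a' (j - Posz r.+1) - a' (j - Posz r).
have hsum : forall m, \sum_(r < m) x r = a' (j - Posz m).
  move=> m; rewrite -(big_mkord xpredT x).
  rewrite (telescope_sumr_eq (fun r => a' (j - Posz r))) //.
  by rewrite subr0 ha'j subr0.
exists (existT _ j x); split.
- move=> r; split=> /=.
  + apply: Im_of_dl; first lia.
    rewrite /x linearB ha'1; last lia.
    have e : j - Posz r - 1 = j - Posz r.+1 by lia.
    have := hc (j - Posz r) ltac:(lia); rewrite e => <-.
    rewrite -(del_shift (i0 := j - Posz r.+1)); try lia.
    rewrite ha'1; last lia.
    exact: subrr.
  + by apply: DyB.
- exists j; split; first exact: lexx; split; first exact: lexx.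
  move=> i /= hi _; congr (push _ _).
  rewrite /Fs /S hsum.
  have -> : j - Posz (absz (j - i)%R) = i by lia.
  exact: ha'1.
Qed.

End Help.

Lemma natF (R : pzRingType) (X Y : RCE R) (phi : RCEMor X Y) (n : int) (a : Wrep X n) :
  Keqv (Fm (Wmap phi a)) (Kmap phi (Fm a)).
Proof.
case: a => s x; exists s; split; first exact: lexx; split; first exact: lexx.
move=> i /= hi _; congr (push _ _).
rewrite /Fs /S mor_del //= !linear_sum //.
Qed.

Unset Implicit Arguments.

Theorem theorem6p7 (R : pzRingType) :
  exists F : forall (X : RCE R) (n : int), Wrep X n -> Krep X (n - 1),
    (forall (X : RCE R) (n : int), is_iso_deg_m1 (F X n)) /\
    (forall (X Y : RCE R) (phi : RCEMor X Y) (n : int) (a : Wrep X n),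
       Wmem a -> Keqv (F Y n (Wmap phi a)) (Kmap phi (F X n a))).
Proof.
exists (fun X n => @Fm R X n); split.
- move=> X n; split; first exact: P1.
  split; first exact: P2.
  split; first by move=> a b c z; exact: P3.
  split; first exact: P4.
  exact: P5.
- move=> X Y phi n a _; exact: natF.
Qed.
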